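(* Let $R$ be an integer with $1\le R\le\frac{\log n}{24\log\log n}$, $L=6R$, $\eta=n^{1/(2L)}$. Let $\mu_1,\ldots,\mu_n$ be i.i.d. with distribution $\pi$, let $\mu_*=\frac12+\sum_{\ell=1}^L\eta^{-\ell}$, and let $\mathcal{E}_0$ be the event that there is a unique $i^*\in[n]$ with $\mu_{i^*}=\mu_*$. Define $H=\sum_{i\in[n],\,i\neq i^*}(\mu_*-\mu_i)^{-2}$ on $\mathcal{E}_0$. Then $\mathbb{E}[H\mid\mathcal{E}_0]\le\eta^{2+2L}L$.
   Context: $\pi$ is the distribution of the random variable $\mu=\frac12+\sum_{\ell=1}^L X_\ell\eta^{-\ell}$, where $X_1,\ldots,X_L$ are independent Bernoulli random variables each with mean $\eta^{-2}$. *)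

(* Defs.v *)
From HB Require Import structures.
From mathcomp Require Import all_boot all_order all_algebra.
From mathcomp Require Import reals exp.
Set Implicit Arguments. Unset Strict Implicit. Unset Printing Implicit Defensive.
Import Order.TTheory GRing.Theory Num.Theory.
Local Open Scope ring_scope.

(* Discrete model of n i.i.d. copies of mu = 1/2 + sum_{l=1}^L X_l eta^-l,
   X_l independent Bernoulli(eta^-2).  An outcome records all the bits
   X_{i,l} (i < n, l < L; index l stands for l+1). *)
Definition outcome (n L : nat) := {ffun 'I_n -> {ffun 'I_L -> bool}}.

Section Model.
Variable R : realType.

Definition bern (p : R) (b : bool) : R := if b then p else 1 - p.

Definition weight (n L : nat) (eta : R) (x : outcome n L) : R :=
  \prod_(i < n) \prod_(l < L) bern (eta ^- 2) (x i l).

Definition mu (n L : nat) (eta : R) (x : outcome n L) (i : 'I_n) : R :=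
  2^-1 + \sum_(l < L) (x i l)%:R * eta ^- l.+1.

Definition mustar (L : nat) (eta : R) : R :=
  2^-1 + \sum_(l < L) eta ^- l.+1.

Definition E0 (n L : nat) (eta : R) (x : outcome n L) : bool :=
  #|[set i | mu eta x i == mustar L eta]| == 1%N.

(* the index i* (meaningful on E0) *)
Definition istar (n L : nat) (eta : R) (x : outcome n L) : option 'I_n :=
  [pick i | mu eta x i == mustar L eta].

Definition H (n L : nat) (eta : R) (x : outcome n L) : R :=
  \sum_(i < n | Some i != istar eta x) (mustar L eta - mu eta x i) ^- 2.

Definition condE_H_E0 (n L : nat) (eta : R) : R :=
  (\sum_(x : outcome n L | E0 eta x) weight eta x * H eta x)
  / (\sum_(x : outcome n L | E0 eta x) weight eta x).

End Model.

(* Main.v *)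
Require Import Defs.
From HB Require Import structures.
From mathcomp Require Import all_boot all_order all_algebra.
From mathcomp Require Import reals exp.
From mathcomp Require Import perm.
From mathcomp Require Import ring lra.
Import Order.TTheory GRing.Theory Num.Theory.
Local Open Scope ring_scope.
Set Implicit Arguments. Unset Strict Implicit. Unset Printing Implicit Defensive.

Section Row.
Variables (R : realType) (L : nat) (eta : R).
Hypothesis eta1 : 1 <= eta.

Let p : R := eta ^- 2.
Local Notation row := {ffun 'I_L -> bool}.
Definition vrow (y : row) : R := \prod_(l < L) bern (eta ^- 2) (y l).
Definition rowmu (y : row) : R := 2^-1 + \sum_(l < L) (y l)%:R * eta ^- l.+1.
Definition Arow (y : row) : bool := rowmu y == mustar L eta.
Definition frow (y : row) : R := (mustar L eta - rowmu y) ^- 2.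
Definition fz (k : 'I_L) (y : row) : bool := ~~ y k && [forall l : 'I_L, (l < k)%N ==> y l].

Lemma eta_gt0 : 0 < eta.
Proof. exact: lt_le_trans ltr01 eta1. Qed.

Lemma p_ge0 : 0 <= p.
Proof. by rewrite /p invr_ge0 exprn_ge0 // ltW // eta_gt0. Qed.

Lemma p_le1 : p <= 1.
Proof. by rewrite /p invf_le1 ?exprn_ege1 // exprn_gt0 // eta_gt0. Qed.

Lemma bern_ge0 b : 0 <= bern p b.
Proof. by case: b => /=; rewrite ?subr_ge0 ?p_ge0 ?p_le1. Qed.

Lemma vrow_ge0 (y : row) : 0 <= vrow y.
Proof. by apply: prodr_ge0 => l _; apply: bern_ge0. Qed.

Lemma d_eq (y : row) : mustar L eta - rowmu y = \sum_(l < L) (1 - (y l)%:R) * eta ^- l.+1.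
Proof.
rewrite /mustar /rowmu opprD addrACA subrr add0r -sumrB.
by apply: eq_bigr => l _; rewrite mulrBl mul1r.
Qed.

Lemma d_ge (y : row) (k : 'I_L) : ~~ y k -> eta ^- k.+1 <= mustar L eta - rowmu y.
Proof.
move=> yk; rewrite d_eq (bigD1 k) //= (negbTE yk) subr0 mul1r lerDl.
apply: sumr_ge0 => l _; apply: mulr_ge0.
  by case: (y l); rewrite ?subrr // subr0.
by rewrite invr_ge0 exprn_ge0 // ltW // eta_gt0.
Qed.

Lemma fz_notA k (y : row) : fz k y -> ~~ Arow y.
Proof.
case/andP=> yk _; rewrite /Arow eq_sym -subr_eq0; apply/negP=> /eqP d0.
have := d_ge yk; rewrite d0 leNgt => /negP; apply.
by rewrite invr_gt0 exprn_gt0 // eta_gt0.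
Qed.


Lemma prod_piece (g : nat -> R) m k : (k < m)%N -> (forall l, (l < k)%N -> g l = p) ->
  g k = 1 - p -> (forall l, (k < l)%N -> g l = 1) -> \prod_(l < m) g l = p ^+ k * (1 - p).
Proof.
move=> km hlt hk hgt.
rewrite -(big_mkord xpredT) (@big_cat_nat _ _ _ k 0 m _ _ (leq0n k) (ltnW km)) /= (@big_cat_nat _ _ _ k.+1 k m _ _ (leqnSn k) km) /= big_nat1 hk.
rewrite (eq_big_nat _ _ (F2 := fun=> p)); last by move=> i /andP[_ ]; apply: hlt.
rewrite prodr_const_nat subn0 (big1_seq) ?mulr1 //.
move=> i /andP[_]; rewrite mem_index_iota => /andP[ki _]; exact: hgt.
Qed.

Lemma sum_v_fz k : \sum_(y : row) vrow y * (fz k y)%:R = p ^+ k * (1 - p).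
Proof.
pose c (l : 'I_L) (b : bool) : R :=
  if (l < k)%N then b%:R else if val l == val k then (~~ b)%:R else 1.
have E : forall y : row, vrow y * (fz k y)%:R = \prod_l (bern p (y l) * c l (y l)).
  move=> y; rewrite big_split /=; congr (_ * _).
  case fzP: (fz k y).
  - move: fzP => /andP[yk /forallP ylt]; rewrite big1 // => l _; rewrite /c.
    case: ltnP => [lk|kl]; first by have := ylt l; rewrite lk /= => ->.
    case: eqP => [/val_inj ->|//]; by rewrite (negbTE yk).
  - move/negbT: fzP; rewrite negb_and negbK => /orP[yk | /forallPn [l]].
    + by rewrite (bigD1 k) //= /c ltnn eqxx yk /= mul0r.
    + rewrite negb_imply => /andP[lk yl].
      by rewrite (bigD1 l) //= /c lk (negbTE yl) mul0r.
rewrite (eq_bigr _ (fun y _ => E y)) -(bigA_distr_bigA (fun l b => bern p b * c l b)) /=.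
rewrite (eq_bigr (fun l : 'I_L => (fun m : nat => if (m < k)%N then p
           else if m == val k then 1 - p else 1) (val l))); last first.
  move=> l _; rewrite big_bool /= /c.
  case: ltnP => lk; first by rewrite mulr1 mulr0 addr0.
  by case: eqP => _; rewrite /= ?mulr0 ?mulr1 ?add0r ?addr0 // addrC subrK.
rewrite (@prod_piece (fun m : nat => if (m < k)%N then p else if m == val k then 1 - p else 1) L k (ltn_ord k)) //=.
- by move=> l ->.
- by rewrite ltnn eqxx.
- by move=> l kl; rewrite ltnNge ltnW //= gtn_eqF.
Qed.

Lemma f_le (y : row) :
  (~~ Arow y)%:R * frow y <= \sum_(k < L) (fz k y)%:R * eta ^+ (2 * k.+1).
Proof.
have rhs0 : 0 <= \sum_(k < L) (fz k y)%:R * eta ^+ (2 * k.+1).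
  by apply: sumr_ge0 => k _; rewrite mulr_ge0 // exprn_ge0 // ltW // eta_gt0.
case Ay: (Arow y); first by rewrite mul0r.
rewrite mul1r.
have [l yl] : exists l, ~~ y l.
  case: (pickP (fun l => ~~ y l)) => [l yl | all1]; first by exists l.
  suff : Arow y by rewrite Ay.
  rewrite /Arow /rowmu /mustar; apply/eqP.
  congr (_ + _); apply: eq_bigr => l _; have := all1 l; case: (y l) => // _.
  by rewrite mul1r.
case: (@arg_minnP _ l (fun i => ~~ y i) val yl) => k yk kmin.
have fzk : fz k y.
  rewrite /fz yk /=; apply/forallP => j; apply/implyP => jk.
  apply/negPn/negP => yj; have := kmin j yj; by rewrite leqNgt jk.
apply: le_trans (_ : eta ^+ (2 * k.+1) <= _); last first.
  by rewrite (bigD1 k) //= fzk mul1r lerDl; apply: sumr_ge0 => j _;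
     rewrite mulr_ge0 // exprn_ge0 // ltW // eta_gt0.
have dge := d_ge yk.
have e0 : 0 < eta ^- k.+1 by rewrite invr_gt0 exprn_gt0 // eta_gt0.
have d0 : 0 < mustar L eta - rowmu y by apply: lt_le_trans dge.
rewrite /frow -[eta ^+ _]invrK lef_pV2 ?posrE ?invr_gt0 ?exprn_gt0 ?eta_gt0 //.
have -> : (eta ^+ (2 * k.+1))^-1 = (eta ^- k.+1) ^+ 2 by rewrite mulnC exprM exprVn.
by rewrite !expr2 ler_pM // ltW.
Qed.

Lemma row_ineq : \sum_(y : row) vrow y * ((~~ Arow y)%:R * frow y)
   <= eta ^+ 2 * L%:R * \sum_(y : row) vrow y * (~~ Arow y)%:R.
Proof.
apply: le_trans (_ : \sum_(y : row) vrow y *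
   \sum_(k < L) (fz k y)%:R * eta ^+ (2 * k.+1) <= _).
  by apply: ler_sum => y _; apply: ler_wpM2l; [exact: vrow_ge0 | exact: f_le].
under eq_bigr do rewrite mulr_sumr.

rewrite exchange_big /=.
have -> : eta ^+ 2 * L%:R * \sum_(y : row) vrow y * (~~ Arow y)%:R =
   \sum_(k < L) eta ^+ 2 * \sum_(y : row) vrow y * (~~ Arow y)%:R.
  by rewrite sumr_const card_ord -[in RHS]mulr_natr mulrAC.
apply: ler_sum => k _.
rewrite (eq_bigr (fun y : row => vrow y * (fz k y)%:R * eta ^+ (2 * k.+1)));
  last by move=> y _; rewrite mulrA.
rewrite -mulr_suml sum_v_fz.
have -> : p ^+ k * (1 - p) * eta ^+ (2 * k.+1) = eta ^+ 2 * (1 - p).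
  rewrite /p mulnS exprD exprVn exprM; field.
  by rewrite !expf_neq0 // gt_eqF // eta_gt0.
apply: ler_wpM2l; first by rewrite exprn_ge0 // ltW // eta_gt0.
pose k0 : 'I_L := Ordinal (leq_ltn_trans (leq0n k) (ltn_ord k)).
rewrite -[1 - p]mul1r -(expr0 p) -(sum_v_fz k0).
apply: ler_sum => y _; apply: ler_wpM2l; first exact: vrow_ge0.
case fzy: (fz k0 y); last by rewrite ler0n.
by rewrite (fz_notA fzy).
Qed.

End Row.

Lemma resample (R : realType) (I J : finType) (i : I) (y0 : J) (G : {ffun I -> J} -> R) :
  (forall x x' : {ffun I -> J}, (forall j, j != i -> x j = x' j) -> G x = G x') ->
  forall K : J -> R, \sum_(x : {ffun I -> J}) K (x i) * G x = (\sum_y K y) * \sum_(x : {ffun I -> J} | x i == y0) G x.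
Proof.
move=> Ginv K.
rewrite (partition_big (fun x : {ffun I -> J} => x i) xpredT) //= mulr_suml.
apply: eq_bigr => y _.
rewrite (eq_bigr (fun x => K y * G x)); last by move=> x /eqP ->.
rewrite -mulr_sumr; congr (_ * _).
pose s := tperm y0 y.
pose h (x : {ffun I -> J}) : {ffun I -> J} := [ffun j => if j == i then s (x j) else x j].
have hK : involutive h.
  move=> x; apply/ffunP => j; rewrite !ffunE; case: eqP => // _; exact: tpermK.
rewrite (reindex_inj (inv_inj hK)) /=.
apply: eq_big => x.
  by rewrite /h ffunE eqxx -[X in _ == X](tpermL y0 y) (inj_eq perm_inj).
by move=> _; apply: Ginv => j ji; rewrite /h ffunE (negbTE ji).
Qed.

Section Outer.
Variables (R : realType) (n L : nat) (eta : R).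
Hypothesis eta1 : 1 <= eta.
Local Notation row := {ffun 'I_L -> bool}.
Local Notation A := (@Arow _ L eta).

Lemma muE (x : outcome n L) j : mu eta x j = rowmu eta (x j).
Proof. by []. Qed.

Lemma E0_key (x : outcome n L) : E0 eta x -> exists i0, forall j, A (x j) = (j == i0).
Proof.
move=> /cards1P [i0 Si0]; exists i0 => j.
have := congr1 (fun S : {set 'I_n} => j \in S) Si0; rewrite /= !inE => <-; by [].
Qed.

Lemma E0_istar (x : outcome n L) : E0 eta x ->
  forall i, (Some i != istar eta x) = ~~ A (x i).
Proof.
move=> /E0_key [i0 key] i; rewrite /istar.
case: pickP => [j Hj | none].
  have : A (x j) by exact: Hj.
  by rewrite key => /eqP ->; rewrite key.
by have := none i0; rewrite /= muE; move: (key i0); rewrite eqxx /Arow => ->.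
Qed.

Lemma E0_count (x : outcome n L) : E0 eta x ->
  \sum_(i < n) ((~~ A (x i))%:R : R) = (n - 1)%:R.
Proof.
move=> /E0_key [i0 key].
rewrite (bigD1 i0) //= key eqxx /= add0r.
rewrite (eq_bigr (fun=> 1)); last by move=> i ii0; rewrite key ii0.
have h : \sum_(i < n) (1 : R) = 1 + \sum_(i < n | i != i0) 1 by rewrite (bigD1 i0).
move: h; rewrite sumr_const card_ord => h.
apply: (@addrI _ 1); rewrite -h natrB ?(leq_ltn_trans (leq0n i0) (ltn_ord i0)) //.
by rewrite addrC subrK.
Qed.

Definition Gi (i : 'I_n) (x : outcome n L) : R :=
  (\prod_(j < n | j != i) vrow eta (x j)) *
  ((#|[set j | (j != i) && A (x j)]| == 1%N) : nat)%:R.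

Lemma weightE (x : outcome n L) : weight eta x = \prod_(j < n) vrow eta (x j).
Proof. by []. Qed.

Lemma per_i (i : 'I_n) (Phi : row -> R) (x : outcome n L) :
  (if E0 eta x then weight eta x * ((~~ A (x i))%:R * Phi (x i)) else 0)
  = vrow eta (x i) * ((~~ A (x i))%:R * Phi (x i)) * Gi i x.
Proof.
case Ax: (A (x i)); first by case: ifP => _; rewrite /= !(mul0r, mulr0).
have -> : E0 eta x = (#|[set j | (j != i) && A (x j)]| == 1%N).
  rewrite /E0 (_ : [set j | mu eta x j == mustar L eta] = [set j | (j != i) && A (x j)]) //.
  apply/setP => j; rewrite !inE muE.
  case: (eqVneq j i) => [->|] //=.
rewrite weightE (bigD1 i) //= /Gi.
case: (_ == 1%N); rewrite /= ?mulr1n ?mulr0 ?mul1r ?mulr1 //.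
by rewrite mulrAC.
Qed.

Lemma Gi_inv i (x x' : outcome n L) : (forall j, j != i -> x j = x' j) -> Gi i x = Gi i x'.
Proof.
move=> h; rewrite /Gi; congr (_ * _).
  by apply: eq_bigr => j ji; rewrite h.
rewrite (_ : [set j | (j != i) && A (x j)] = [set j | (j != i) && A (x' j)]) //.
apply/setP => j; rewrite !inE.
by case: (eqVneq j i) => //= ji; rewrite h.
Qed.

Lemma Gi_ge0 i x : 0 <= Gi i x.
Proof.
by rewrite /Gi mulr_ge0 // prodr_ge0 // => j _; apply: vrow_ge0.
Qed.

Lemma per_i_ineq i :
  \sum_(x : outcome n L | E0 eta x) weight eta x * ((~~ A (x i))%:R * frow eta (x i))
  <= eta ^+ 2 * L%:R * \sum_(x : outcome n L | E0 eta x) weight eta x * (~~ A (x i))%:R.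
Proof.
rewrite !big_mkcond /=.
rewrite (eq_bigr _ (fun x _ => per_i i (@frow _ L eta) x)).
rewrite [X in _ <= _ * X]big_mkcond /=.
have -> : \sum_(x : outcome n L) (if E0 eta x then weight eta x * (~~ A (x i))%:R else 0)
   = \sum_(x : outcome n L) vrow eta (x i) * ((~~ A (x i))%:R * 1) * Gi i x.
  by apply: eq_bigr => x _; rewrite -(per_i i (fun=> 1)) /= mulr1.
rewrite (@resample R _ _ i [ffun=> true] _ (@Gi_inv i)
   (fun y => vrow eta y * ((~~ A y)%:R * frow eta y))).
rewrite (@resample R _ _ i [ffun=> true] _ (@Gi_inv i)
   (fun y => vrow eta y * ((~~ A y)%:R * 1))).
rewrite mulrA; apply: ler_wpM2r.
  by apply: sumr_ge0 => x _; apply: Gi_ge0.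
under [X in _ <= _ * X]eq_bigr do rewrite mulr1.
exact: row_ineq.
Qed.

Lemma outer_bound : condE_H_E0 n L eta <= (n - 1)%:R * (eta ^+ 2 * L%:R).
Proof.
rewrite /condE_H_E0.
set D := \sum_(x : outcome n L | E0 eta x) weight eta x.
have D0 : 0 <= D.
  by apply: sumr_ge0 => x _; rewrite weightE prodr_ge0 // => j _; apply: vrow_ge0.
have N_eq : \sum_(x : outcome n L | E0 eta x) weight eta x * H eta x =
   \sum_i \sum_(x : outcome n L | E0 eta x) weight eta x * ((~~ A (x i))%:R * frow eta (x i)).
  rewrite exchange_big /=; apply: eq_bigr => x Ex.
  rewrite /H mulr_sumr big_mkcond /=; apply: eq_bigr => i _.
  rewrite (E0_istar Ex); case: (~~ _) => /=; by rewrite ?mulr1n ?mul1r ?mul0r ?mulr0.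
have D_eq : (n - 1)%:R * D =
   \sum_i \sum_(x : outcome n L | E0 eta x) weight eta x * (~~ A (x i))%:R.
  rewrite exchange_big mulr_sumr; apply: eq_bigr => x Ex.
  by rewrite -mulr_sumr (E0_count Ex) mulrC.
have c0 : 0 <= (n - 1)%:R * (eta ^+ 2 * L%:R).
  by rewrite !mulr_ge0 ?exprn_ge0 // (le_trans ler01 eta1).
have ND : \sum_(x : outcome n L | E0 eta x) weight eta x * H eta x
           <= (n - 1)%:R * (eta ^+ 2 * L%:R) * D.
  rewrite N_eq (mulrC (n - 1)%:R) -mulrA D_eq mulr_sumr.
  by apply: ler_sum => i _; apply: per_i_ineq.
case: (eqVneq D 0) => [->|Dn0]; first by rewrite invr0 mulr0.
by rewrite ler_pdivrMr ?lt_def ?Dn0.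
Qed.

End Outer.

Unset Implicit Arguments.
Set Strict Implicit.

Theorem lemma5 (R : realType) (n r : nat) :
  (1 <= r)%N ->
  (r%:R : R) <= ln (n%:R : R) / (24 * ln (ln (n%:R : R))) ->
  let L := (6 * r)%N in
  let eta : R := (n%:R : R) `^ (1 / (2 * L)%:R) in
  condE_H_E0 n L eta <= eta ^+ (2 + 2 * L) * L%:R.
Proof.
move=> r1 hr; cbv zeta.
set L := (6 * r)%N.
set eta := (n%:R : R) `^ _.
have n1 : (1 <= n)%N.
  case: n hr {eta} => [|//]; rewrite ln0 // mul0r => h.
  by move: h; rewrite leNgt ltr0n r1.
have n1R : (1 : R) <= n%:R by rewrite ler1n.
have eta1 : 1 <= eta.
  rewrite /eta -{1}(powRr0 (n%:R : R)).
  apply: (ler_powR n1R).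
  by rewrite divr_ge0.
have L0 : ((2 * L)%:R : R) != 0 by rewrite pnatr_eq0 /L muln_eq0 /= muln_eq0 /= -lt0n.
have etaL : eta ^+ (2 * L) = n%:R.
  rewrite -powR_mulrn ?(le_trans ler01 eta1) // /eta -powRrM mul1r mulVf //.
  by rewrite powRr1 // ler0n.
apply: le_trans (outer_bound n L eta1) _.
rewrite exprD etaL.
have -> : eta ^+ 2 * n%:R * L%:R = n%:R * (eta ^+ 2 * L%:R) by ring.
apply: ler_wpM2r; first by rewrite mulr_ge0 ?ler0n ?exprn_ge0 // (le_trans ler01 eta1).
by rewrite ler_nat leq_subr.
Qed.
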